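(* Let $V=[n]$. For every traceless self-adjoint operator $X$ on $\mathcal H_V$, $$\|X\|_{W_1}\le\|X\|_1+\|\mathrm{Tr}_1X\|_1+\|\mathrm{Tr}_{12}X\|_1+\dots+\|\mathrm{Tr}_{1\ldots n-1}X\|_1 .$$
   Context: Each site of $[n]$ carries a qudit $\mathbb C^d$; $\mathrm{Tr}_{1\ldots k}$ is the partial trace over sites $1,\dots,k$. Quantum Lipschitz constant: for self-adjoint $H$, $\|H\|_L:=2\max_{i\in V}\min\{\|H-H^{(i)}\|_\infty: H^{(i)}\text{ self-adjoint acting trivially on site }i\}$. Quantum $W_1$ norm: for traceless self-adjoint $X$, $\|X\|_{W_1}:=\max\{\mathrm{Tr}[XH]:H\text{ self-adjoint},\|H\|_L\le1\}$. *)

(* Defs.v *)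
From HB Require Import structures.
From mathcomp Require Import all_boot all_order all_algebra.
From mathcomp Require Import complex.
From mathcomp Require Import boolp classical_sets reals.

Set Implicit Arguments.
Unset Strict Implicit.
Unset Printing Implicit Defensive.

Import Order.TTheory GRing.Theory Num.Theory Num.Def.
Local Open Scope ring_scope.
Local Open Scope classical_set_scope.

Section Qudits.
Variable R : realType.
Local Notation C := (R[i]).

(* Computational basis of n qudits C^d : configurations 'I_n -> 'I_d.
   Site j of the paper (1 <= j <= n) is the ordinal j-1. *)
Definition cfg (n d : nat) := {ffun 'I_n -> 'I_d}.

(* Operators on H_V = (C^d)^{\otimes n}, as square complex matrices
   indexed by (the enumeration of) the computational basis. *)
Definition Op (n d : nat) := 'M[C]_(#|{: cfg n d}|).

Definition entry n d (A : Op n d) (x y : cfg n d) : C :=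
  A (enum_rank x) (enum_rank y).

Definition mkOp n d (f : cfg n d -> cfg n d -> C) : Op n d :=
  \matrix_(i, j) f (enum_val i) (enum_val j).

Definition selfadj n d (A : Op n d) : Prop := A ^T = map_mx conjC A.

Definition cabs2 (z : C) : R := complex.Re z ^+ 2 + complex.Im z ^+ 2.
Definition vnorm m (v : 'cV[C]_m) : R := Num.sqrt (\sum_i cabs2 (v i 0)).

Definition opnorm m (A : 'M[C]_m) : R :=
  sup [set vnorm (A *m v) | v in [set v : 'cV[C]_m | vnorm v = 1]].

Definition trnorm m (A : 'M[C]_m) : R :=
  \sum_i Num.sqrt (complex.Re (spectral_diag ((map_mx conjC A)^T *m A) 0 i)).

(* A acts trivially on site i : A = I_i (x) K for an operator K on the other
   sites; K is given by its matrix entries as a function of the restrictions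
   of the configurations to the sites different from i. *)
Definition acts_trivially n d (i : 'I_n) (A : Op n d) : Prop :=
  exists K : cfg n d -> cfg n d -> C,
    (forall x x' y y' : cfg n d,
        (forall j, j != i -> x j = x' j /\ y j = y' j) -> K x y = K x' y') /\
    (forall x y : cfg n d, entry A x y = (x i == y i)%:R * K x y).

Definition lipschitz n d (H : Op n d) : R :=
  2 * \big[Num.max/0]_(i < n)
        inf [set opnorm (H - Hi) |
               Hi in [set Hi : Op n d | selfadj Hi /\ acts_trivially i Hi]].

Definition W1norm n d (X : Op n d) : R :=
  sup [set complex.Re (\tr (X *m H)) |
         H in [set H : Op n d | selfadj H /\ lipschitz H <= 1]].

Lemma glue_subproof n k (i : 'I_n) : ~~ (i < k)%N -> (i - k < n - k)%N.
Proof.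
move=> hik; have hi := ltn_ord i; rewrite -leqNgt in hik.
by rewrite ltn_sub2r // (leq_ltn_trans hik hi).
Qed.

Definition glue n d k (z : cfg k d) (x : cfg (n - k) d) : cfg n d :=
  [ffun i : 'I_n =>
     match (i < k)%N as b return ((i < k)%N = b -> 'I_d) with
     | true => fun h => z (Ordinal h)
     | false => fun h => x (Ordinal (glue_subproof (negbT h)))
     end erefl].

Definition ptrace n d k (X : Op n d) : Op (n - k) d :=
  mkOp (fun x y => \sum_(z : cfg k d) entry X (glue z x) (glue z y)).

End Qudits.

(* Main.v *)
Require Import Defs.
From HB Require Import structures.
From mathcomp Require Import all_boot all_order all_algebra.
From mathcomp Require Import complex.
From mathcomp Require Import boolp classical_sets reals.
From mathcomp Require Import ring lra.
Import Order.TTheory GRing.Theory Num.Theory Num.Def.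
Set Implicit Arguments. Unset Strict Implicit. Unset Printing Implicit Defensive.
Local Open Scope ring_scope.

Section S.
Variable R : realType.
Local Notation C := (R[i]).

Definition cmod (z : C) : R := Num.sqrt (cabs2 z).

Lemma cabs2_ge0 (z : C) : 0 <= cabs2 z.
Proof. by rewrite /cabs2 addr_ge0 // sqr_ge0. Qed.

Lemma cmod_ge0 (z : C) : 0 <= cmod z. Proof. exact: sqrtr_ge0. Qed.

Lemma cmod_normc (z : C) : cmod z = Normc.normc z.
Proof. by case: z. Qed.

Lemma cmodM (a b : C) : cmod (a * b) = cmod a * cmod b.
Proof. by rewrite !cmod_normc Normc.normcM. Qed.

Lemma cmodD (a b : C) : cmod (a + b) <= cmod a + cmod b.
Proof. by rewrite !cmod_normc; apply: le_normcD. Qed.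

Lemma ReD (a b : C) : complex.Re (a + b) = complex.Re a + complex.Re b.
Proof. by case: a; case: b. Qed.

Lemma Re0 : complex.Re (0 : C) = 0. Proof. by []. Qed.

Lemma ReN (a : C) : complex.Re (- a) = - complex.Re a.
Proof. by case: a. Qed.

Lemma ReB (a b : C) : complex.Re (a - b) = complex.Re a - complex.Re b.
Proof. by rewrite ReD ReN. Qed.

Lemma Re_sum (I : Type) (r : seq I) (P : pred I) (F : I -> C) :
  complex.Re (\sum_(i <- r | P i) F i) = \sum_(i <- r | P i) complex.Re (F i).
Proof. exact: (big_morph _ ReD Re0). Qed.

Lemma Re_real_mul (c : R) (z : C) : complex.Re ((c%:C)%C * z) = c * complex.Re z.
Proof. by case: z => a b /=; ring. Qed.

Lemma Re_conj_self (a : C) : complex.Re (conjC a * a) = cabs2 a.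
Proof. by case: a => a1 a2 /=; rewrite /cabs2 /=; ring. Qed.

Lemma le_sqrt_mul (x p q : R) : 0 <= p -> 0 <= q -> x ^+ 2 <= p * q ->
  x <= Num.sqrt p * Num.sqrt q.
Proof.
move=> p0 q0 h; have [x0|x0] := leP x 0.
  by apply: le_trans x0 _; rewrite mulr_ge0 // sqrtr_ge0.
rewrite -sqrtrM // -(ger0_norm (ltW x0)) -sqrtr_sqr.
by rewrite ler_sqrt // mulr_ge0.
Qed.
Arguments le_sqrt_mul : clear implicits.

Lemma Re_conj_mul (a b : C) : complex.Re (conjC a * b) <= cmod a * cmod b.
Proof.
case: a => a1 a2; case: b => b1 b2; rewrite /cmod /cabs2 /=.
apply: le_sqrt_mul; rewrite ?addr_ge0 ?sqr_ge0 //.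
have h : 0 <= (a1 * b2 - a2 * b1) ^+ 2 by apply: sqr_ge0.
move: h; rewrite !expr2 => h.
nra.
Qed.

Lemma cabs2_cmod (z : C) : cmod z ^+ 2 = cabs2 z.
Proof. by rewrite sqr_sqrtr // cabs2_ge0. Qed.

Lemma CS_sq (I : finType) (x y : I -> R) :
  (\sum_i x i * y i) ^+ 2 <= (\sum_i x i ^+ 2) * (\sum_i y i ^+ 2).
Proof.
have h : 0 <= \sum_i \sum_j (x i * y j - x j * y i) ^+ 2.
  by apply: sumr_ge0 => i _; apply: sumr_ge0 => j _; apply: sqr_ge0.
have e : \sum_i \sum_j (x i * y j - x j * y i) ^+ 2 =
    2 * ((\sum_i x i ^+ 2) * (\sum_i y i ^+ 2) - (\sum_i x i * y i) ^+ 2).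
  have e1 : forall i j, (x i * y j - x j * y i) ^+ 2 =
     x i ^+ 2 * y j ^+ 2 + x j ^+ 2 * y i ^+ 2 - 2 * ((x i * y i) * (x j * y j)).
    by move=> i j; ring.
  under eq_bigr do under eq_bigr do rewrite e1.
  set A := \sum_i x i ^+ 2; set B := \sum_i y i ^+ 2; set S := \sum_i x i * y i.
  have e2 : forall i, \sum_j (x i ^+ 2 * y j ^+ 2 + x j ^+ 2 * y i ^+ 2 -
      2 * (x i * y i * (x j * y j))) = x i ^+ 2 * B + A * y i ^+ 2 - 2 * (x i * y i) * S.
    move=> i; rewrite sumrB big_split /= /A /B /S mulr_sumr mulr_suml mulr_sumr.
    by congr (_ - _); apply: eq_bigr => j _; ring.
  under eq_bigr do rewrite e2.
  rewrite sumrB big_split /= -!mulr_suml -?mulr_sumr.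
  rewrite -/A -/B -/S.
  ring.
have : 0 <= (\sum_i x i ^+ 2) * (\sum_i y i ^+ 2) - (\sum_i x i * y i) ^+ 2.
  by move: h; rewrite e pmulr_rge0.
by rewrite subr_ge0.
Qed.

Lemma CS (I : finType) (x y : I -> R) :
  \sum_i x i * y i <= Num.sqrt (\sum_i x i ^+ 2) * Num.sqrt (\sum_i y i ^+ 2).
Proof.
apply: le_sqrt_mul; rewrite ?sumr_ge0 // => *; first exact: sqr_ge0.
- exact: sqr_ge0.
- exact: CS_sq.
Qed.

End S.

Local Open Scope classical_set_scope.
Section S2.
Variable R : realType.
Local Notation C := (R[i]).

Definition dotc m (u w : 'cV[C]_m) : C := \sum_k conjC (u k 0) * w k 0.

Lemma vnorm_ge0 m (v : 'cV[C]_m) : 0 <= vnorm v.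
Proof. exact: sqrtr_ge0. Qed.

Lemma sum_cabs2_ge0 m (v : 'cV[C]_m) : 0 <= \sum_k cabs2 (v k 0).
Proof. by apply: sumr_ge0 => k _; apply: cabs2_ge0. Qed.

Lemma vnorm_sq m (v : 'cV[C]_m) : vnorm v ^+ 2 = \sum_k cabs2 (v k 0).
Proof. by rewrite sqr_sqrtr // sum_cabs2_ge0. Qed.

Lemma Re_dotc_self m (v : 'cV[C]_m) : complex.Re (dotc v v) = vnorm v ^+ 2.
Proof.
by rewrite vnorm_sq /dotc Re_sum; apply: eq_bigr => k _; rewrite Re_conj_self.
Qed.

Lemma Re_dotc_le m (u w : 'cV[C]_m) :
  complex.Re (dotc u w) <= vnorm u * vnorm w.
Proof.
rewrite /dotc Re_sum.
have h : \sum_k complex.Re (conjC (u k 0) * w k 0) <= \sum_k cmod (u k 0) * cmod (w k 0).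
  by apply: ler_sum => k _; apply: Re_conj_mul.
apply: le_trans h _.
apply: le_trans (CS (fun k => cmod (u k 0)) (fun k => cmod (w k 0))) _.
by rewrite /vnorm; under eq_bigr do rewrite cabs2_cmod;
   under [X in _ * Num.sqrt X <= _]eq_bigr do rewrite cabs2_cmod.
Qed.

Lemma cabs2N (z : C) : cabs2 (- z) = cabs2 z.
Proof. by case: z => a b; rewrite /cabs2 /= !sqrrN. Qed.

Lemma vnormN m (v : 'cV[C]_m) : vnorm (- v) = vnorm v.
Proof. by rewrite /vnorm; congr Num.sqrt; apply: eq_bigr => k _; rewrite mxE cabs2N. Qed.

Lemma dotcNl m (u w : 'cV[C]_m) : dotc (- u) w = - dotc u w.
Proof.
rewrite /dotc -sumrN; apply: eq_bigr => k _; rewrite mxE rmorphN /=; ring.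
Qed.

Lemma abs_Re_dotc_le m (u w : 'cV[C]_m) :
  `|complex.Re (dotc u w)| <= vnorm u * vnorm w.
Proof.
rewrite ler_norml Re_dotc_le andbT lerNl -ReN -dotcNl -(vnormN u).
exact: Re_dotc_le.
Qed.

Lemma cabs2_eq0 (z : C) : cabs2 z = 0 -> z = 0.
Proof.
case: z => a b; rewrite /cabs2 /= => /eqP.
rewrite paddr_eq0 ?sqr_ge0 // !sqrf_eq0 => /andP[/eqP-> /eqP->] //.
Qed.

Lemma vnorm_eq0 m (v : 'cV[C]_m) : vnorm v = 0 -> v = 0.
Proof.
move=> /eqP; rewrite sqrtr_eq0 => h.
have h0 : \sum_k cabs2 (v k 0) = 0 by apply/eqP; rewrite eq_le h sum_cabs2_ge0.
move: h0 => /eqP; rewrite psumr_eq0; last by move=> k _; apply: cabs2_ge0.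
move=> /allP hk; apply/matrixP => i j; rewrite ord1 mxE.
by apply: cabs2_eq0; apply/eqP; apply: hk; rewrite mem_index_enum.
Qed.

Lemma cabs2Z (c : R) (z : C) : cabs2 ((c%:C)%C * z) = c ^+ 2 * cabs2 z.
Proof. by case: z => a b; rewrite /cabs2 /=; ring. Qed.

Lemma vnormZ m (c : R) (v : 'cV[C]_m) : 0 <= c ->
  vnorm ((c%:C)%C *: v) = c * vnorm v.
Proof.
move=> c0; rewrite /vnorm.
under eq_bigr do rewrite mxE cabs2Z.
by rewrite -mulr_sumr sqrtrM ?sqr_ge0 // sqrtr_sqr ger0_norm.
Qed.

Lemma cmod_sum (I : Type) (r : seq I) (P : pred I) (F : I -> C) :
  cmod (\sum_(i <- r | P i) F i) <= \sum_(i <- r | P i) cmod (F i).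
Proof.
elim/big_rec2: _ => [|i y1 y2 _ h].
  by rewrite /cmod /cabs2 /= expr0n /= addr0 sqrtr0.
by apply: le_trans (cmodD _ _) _; rewrite lerD2l.
Qed.

Lemma sum_sq_le (I : finType) (a : I -> R) : (forall i, 0 <= a i) ->
  \sum_i a i ^+ 2 <= (\sum_i a i) ^+ 2.
Proof.
move=> a0; rewrite [X in _ <= X]expr2 mulr_suml.
apply: ler_sum => i _; rewrite expr2 ler_wpM2l //.
rewrite (bigD1 i) //= lerDl; apply: sumr_ge0 => *; exact: a0.
Qed.

Lemma vnorm_le_sum m (w : 'cV[C]_m) : vnorm w <= \sum_k cmod (w k 0).
Proof.
rewrite /vnorm -(ger0_norm (sumr_ge0 _ (fun k _ => cmod_ge0 (w k 0)))) -sqrtr_sqr.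
rewrite ler_sqrt ?sqr_ge0 //.
under eq_bigr do rewrite -cabs2_cmod.
by apply: sum_sq_le => k; apply: cmod_ge0.
Qed.

Lemma cmod_le_vnorm m (w : 'cV[C]_m) k : cmod (w k 0) <= vnorm w.
Proof.
rewrite /cmod /vnorm ler_sqrt ?sum_cabs2_ge0 //.
rewrite (bigD1 k) //= lerDl; apply: sumr_ge0 => *; exact: cabs2_ge0.
Qed.

Definition opS m (M : 'M[C]_m) :=
  [set vnorm (M *m v) | v in [set v : 'cV[C]_m | vnorm v = 1]].

Lemma opS_ub m (M : 'M[C]_m) : has_ubound (opS M).
Proof.
exists (\sum_i \sum_j cmod (M i j)) => _ [v /= v1 <-].
apply: le_trans (vnorm_le_sum _) _; apply: ler_sum => i _.
rewrite mxE; apply: le_trans (cmod_sum _ _ _) _; apply: ler_sum => j _.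
rewrite cmodM -{2}(mulr1 (cmod (M i j))) ler_wpM2l ?cmod_ge0 //.
by rewrite -v1; apply: cmod_le_vnorm.
Qed.

Lemma opnorm_ge0 m (M : 'M[C]_m) : 0 <= opnorm M.
Proof.
rewrite /opnorm -/(opS M).
have [[y Sy]|nE] := pselect (opS M !=set0).
  apply: le_trans (ub_le_sup (opS_ub M) Sy).
  by case: Sy => v _ <-; apply: vnorm_ge0.
by rewrite sup_out // => -[].
Qed.

Lemma opnorm_ub m (M : 'M[C]_m) (v : 'cV[C]_m) :
  vnorm (M *m v) <= opnorm M * vnorm v.
Proof.
have [v0|vn0] := eqVneq (vnorm v) 0.
  have vn0 : vnorm (0 : 'cV[C]_m) = 0.
    by rewrite /vnorm big1 ?sqrtr0 // => k _; rewrite mxE /cabs2 /= expr0n /= addr0.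
  by rewrite (vnorm_eq0 v0) mulmx0 vn0 mulr0.
have vp : 0 < vnorm v by rewrite lt0r vn0 vnorm_ge0.
set c := (vnorm v)^-1.
have c0 : 0 <= c by rewrite invr_ge0 vnorm_ge0.
have h1 : vnorm ((c%:C)%C *: v) = 1 by rewrite vnormZ // mulVf.
have hS : opS M (vnorm (M *m ((c%:C)%C *: v))) by exists ((c%:C)%C *: v).
have := ub_le_sup (opS_ub M) hS.
rewrite -scalemxAr vnormZ // => h.
by rewrite -ler_pdivrMr // mulrC.
Qed.

Lemma bilin_bound m (M : 'M[C]_m) (u w : 'cV[C]_m) :
  `|complex.Re (dotc u (M *m w))| <= opnorm M * (vnorm u * vnorm w).
Proof.
apply: le_trans (abs_Re_dotc_le _ _) _.
rewrite mulrCA ler_wpM2l ?vnorm_ge0 //; exact: opnorm_ub.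
Qed.

End S2.

Local Close Scope classical_set_scope.

Section S3.
Variable R : realType.
Local Notation C := (R[i]).

Definition adj m n (A : 'M[C]_(m, n)) : 'M[C]_(n, m) := map_mx conjC (A^T).

Lemma adjE m n (A : 'M[C]_(m, n)) : (map_mx conjC A)^T = adj A.
Proof. by rewrite /adj map_trmx. Qed.

Lemma adjM m n p (A : 'M[C]_(m, n)) (B : 'M[C]_(n, p)) : adj (A *m B) = adj B *m adj A.
Proof. by rewrite /adj trmx_mul map_mxM. Qed.

Lemma adjK m n (A : 'M[C]_(m, n)) : adj (adj A) = A.
Proof. by apply/matrixP => i j; rewrite !mxE conjCK. Qed.

Lemma adj_col m n (A : 'M[C]_(m, n)) j : adj (col j A) = row j (adj A).
Proof. by apply/matrixP => i k; rewrite !mxE. Qed.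

Lemma dotc_mx m (x y : 'cV[C]_m) : dotc x y = (adj x *m y) 0 0.
Proof. by rewrite mxE; apply: eq_bigr => k _; rewrite !mxE. Qed.

Lemma rowcol m n p (X : 'M[C]_(m, n)) (Y : 'M[C]_(n, p)) i j :
  (row i X *m col j Y) 0 0 = (X *m Y) i j.
Proof. by rewrite !mxE; apply: eq_bigr => k _; rewrite !mxE. Qed.

Lemma col_mul m n p (A : 'M[C]_(m, n)) (B : 'M[C]_(n, p)) j :
  A *m col j B = col j (A *m B).
Proof. by rewrite !colE mulmxA. Qed.

Lemma vnorm_dotc m (v : 'cV[C]_m) : vnorm v = Num.sqrt (complex.Re (dotc v v)).
Proof.
by rewrite /vnorm /dotc Re_sum; congr Num.sqrt; apply: eq_bigr => k _; rewrite Re_conj_self.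
Qed.

Lemma holder m (Z N : 'M[C]_m) (c : R) :
  (forall u w : 'cV[C]_m, complex.Re (dotc u (N *m w)) <= c * (vnorm u * vnorm w)) ->
  complex.Re (\tr (Z *m N)) <= c * trnorm Z.
Proof.
move=> hb.
set Q := (map_mx conjC Z)^T *m Z.
have QE : Q = adj Z *m Z by rewrite /Q adjE.
have Qn : Q \is normalmx.
  apply/normalmxP; rewrite -/(adj Q) QE adjM adjK; done.
have hQ := orthomx_spectralP Qn.
set P := spectralmx Q in hQ; set lam := spectral_diag Q in hQ.
have PU : P \is unitarymx by apply: spectral_unitarymx.
have hPP : P *m adj P = 1%:M by apply/unitarymxP.
have hinv : invmx P = adj P by rewrite invmx_unitary.
have hPP' : adj P *m P = 1%:M by rewrite -hinv mulVmx // unitarymx_unit.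
have hD : P *m Q *m adj P = diag_mx lam.
  by rewrite {1}hQ hinv !mulmxA hPP mul1mx -mulmxA hPP mulmx1.
set u := fun i => col i (adj P).
have hu : forall i, adj (u i) = row i P by move=> i; rewrite /u adj_col adjK.
have hterm : forall i, dotc (u i) (N *m (Z *m u i)) = (P *m (N *m Z *m adj P)) i i.
  by move=> i; rewrite dotc_mx hu /u 2!col_mul rowcol !mulmxA.
have hu1 : forall i, vnorm (u i) = 1.
  move=> i; rewrite vnorm_dotc dotc_mx hu /u rowcol hPP mxE eqxx /=.
  by rewrite sqrtr1.
have hZu : forall i, vnorm (Z *m u i) = Num.sqrt (complex.Re (lam 0 i)).
  move=> i; rewrite vnorm_dotc dotc_mx adjM hu /u [Z *m _]col_mul -mulmxA [adj Z *m _]col_mul rowcol.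
  by rewrite !mulmxA -(mulmxA P) -QE hD mxE eqxx.
have htr : \tr (Z *m N) = \sum_i dotc (u i) (N *m (Z *m u i)).
  symmetry; under eq_bigr do rewrite hterm.
  rewrite -/(\tr _) mxtrace_mulC -(mulmxA (N *m Z)) hPP' mulmx1 mxtrace_mulC //.
rewrite htr Re_sum /trnorm -/Q -/lam mulr_sumr.
apply: ler_sum => i _; apply: le_trans (hb _ _) _.
by rewrite hu1 mul1r hZu.
Qed.

End S3.

Section S4.
Variable R : realType.
Local Notation C := (R[i]).

Lemma sum_rank (T : finType) (F : 'I_#|T| -> C) :
  \sum_i F i = \sum_(x : T) F (enum_rank x).
Proof. by rewrite (reindex (@enum_rank T)) //; apply: onW_bij; apply: enum_rank_bij. Qed.

Lemma entry_mkOp n d (f : cfg n d -> cfg n d -> C) x y : entry (mkOp f) x y = f x y.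
Proof. by rewrite /entry /mkOp mxE !enum_rankK. Qed.

Lemma tr_entry n d (A B : Op R n d) :
  \tr (A *m B) = \sum_x \sum_y entry A x y * entry B y x.
Proof.
rewrite /mxtrace sum_rank; apply: eq_bigr => x _.
by rewrite mxE sum_rank.
Qed.

Lemma tr_entry1 n d (A : Op R n d) : \tr A = \sum_x entry A x x.
Proof. by rewrite /mxtrace sum_rank. Qed.

Section Glue.
Variables n d k : nat.
Hypothesis hk : (k <= n)%N.

Lemma glue_lo (z : cfg k d) (x : cfg (n - k) d) (i : 'I_n) (j : 'I_k) :
  val i = val j -> glue z x i = z j.
Proof.
move=> e; rewrite ffunE.
have h : (i < k)%N by rewrite e ltn_ord.
generalize (erefl (i < k)%N).
generalize (i < k)%N at 2 3.
case; intros h'. by congr (z _); apply: val_inj.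
by rewrite h' in h.
Qed.

Lemma glue_hi (z : cfg k d) (x : cfg (n - k) d) (i : 'I_n) (j : 'I_(n - k)) :
  val i = (k + val j)%N -> glue z x i = x j.
Proof.
move=> e; rewrite ffunE.
have h : (i < k)%N = false by rewrite e ltnNge leq_addr.
generalize (erefl (i < k)%N).
generalize (i < k)%N at 2 3.
case; intros h'; first by rewrite h' in h.
by congr (x _); apply: val_inj => /=; rewrite e addnC addnK.
Qed.

Lemma hi_lt (j : 'I_(n - k)) : (k + j < n)%N.
Proof. by rewrite -ltn_subRL. Qed.

Definition lo (x : cfg n d) : cfg k d := [ffun j : 'I_k => x (widen_ord hk j)].
Definition hi (x : cfg n d) : cfg (n - k) d := [ffun j => x (Ordinal (hi_lt j))].

Lemma lo_glue z x : lo (glue z x) = z.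
Proof. by apply/ffunP => j; rewrite ffunE (glue_lo _ _ (j := j)). Qed.

Lemma hi_glue z x : hi (glue z x) = x.
Proof. by apply/ffunP => j; rewrite ffunE (glue_hi _ _ (j := j)). Qed.

Lemma glue_lohi x : glue (lo x) (hi x) = x.
Proof.
apply/ffunP => i; have [h|h] := ltnP i k.
  by rewrite (glue_lo _ _ (j := Ordinal h)) // ffunE; congr (x _); apply: val_inj.
have h2 : (i - k < n - k)%N by rewrite ltn_sub2r // (leq_ltn_trans h (ltn_ord i)).
rewrite (glue_hi _ _ (j := Ordinal h2)) /=; last by rewrite subnKC.
by rewrite ffunE; congr (x _); apply: val_inj => /=; rewrite subnKC.
Qed.

Lemma sum_glue (F : cfg n d -> C) :
  \sum_x F x = \sum_(t : cfg k d) \sum_(a : cfg (n - k) d) F (glue t a).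
Proof.
rewrite pair_big /=.
rewrite (reindex (fun p : cfg k d * cfg (n - k) d => glue p.1 p.2)) //.
apply: onW_bij; exists (fun x => (lo x, hi x)).
  by case=> t a /=; rewrite lo_glue hi_glue.
by move=> x /=; rewrite glue_lohi.
Qed.

Lemma sum_glue_R (F : cfg n d -> R) :
  \sum_x F x = \sum_(t : cfg k d) \sum_(a : cfg (n - k) d) F (glue t a).
Proof.
rewrite pair_big /=.
rewrite (reindex (fun p : cfg k d * cfg (n - k) d => glue p.1 p.2)) //.
apply: onW_bij; exists (fun x => (lo x, hi x)).
  by case=> t a /=; rewrite lo_glue hi_glue.
by move=> x /=; rewrite glue_lohi.
Qed.

End Glue.
End S4.

Section S5.
Variable R : realType.
Local Notation C := (R[i]).
Variables n d : nat.
Local Notation cfgn := (cfg n d).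

Definition agree_lo (k : nat) (x y : cfgn) := [forall j : 'I_n, (j < k)%N ==> (x j == y j)].
Definition agree_hi (k : nat) (x y : cfgn) := [forall j : 'I_n, (k <= j)%N ==> (x j == y j)].
Definition sp (k : nat) (w x : cfgn) : cfgn := [ffun j : 'I_n => if (j < k)%N then w j else x j].
Definition inner (k : nat) (M : Op R n d) (x y : cfgn) : C :=
  \sum_(w | agree_hi k w y) entry M w (sp k w x).
Definition Fk (X : Op R n d) (k : nat) (M : Op R n d) : C :=
  ((d ^ k)%:R)^-1 * \sum_x \sum_y (agree_lo k x y)%:R * entry X x y * inner k M x y.

Section GlueK.
Variable k : nat.
Hypothesis hk : (k <= n)%N.

Lemma agree_lo_glue (t t' : cfg k d) (a b : cfg (n - k) d) :
  agree_lo k (glue t a) (glue t' b) = (t == t').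
Proof.
apply/forallP/eqP.
  move=> h; apply/ffunP => j; have := h (widen_ord hk j).
  by rewrite /= ltn_ord /= => /eqP; rewrite !(glue_lo _ _ (j := j)).
move=> <- j; apply/implyP => hj.
by rewrite !(glue_lo _ _ (j := Ordinal hj)).
Qed.

Lemma agree_hi_glue (s t : cfg k d) (c b : cfg (n - k) d) :
  agree_hi k (glue s c) (glue t b) = (c == b).
Proof.
apply/forallP/eqP.
  move=> h; apply/ffunP => j; have := h (Ordinal (hi_lt j)).
  by rewrite /= leq_addr /= => /eqP; rewrite !(glue_hi _ _ (j := j)).
move=> <- j; apply/implyP => hj.
have h2 : (j - k < n - k)%N by rewrite ltn_sub2r // (leq_ltn_trans hj (ltn_ord j)).
by rewrite !(glue_hi _ _ (j := Ordinal h2)) //= subnKC.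
Qed.

Lemma sp_glue (s t : cfg k d) (c a : cfg (n - k) d) : sp k (glue s c) (glue t a) = glue s a.
Proof.
apply/ffunP => j; rewrite ffunE; have [hj|hj] := ltnP j k.
  by rewrite !(glue_lo _ _ (j := Ordinal hj)).
have h2 : (j - k < n - k)%N by rewrite ltn_sub2r // (leq_ltn_trans hj (ltn_ord j)).
by rewrite !(glue_hi _ _ (j := Ordinal h2)) //= subnKC.
Qed.

Lemma inner_glue M (t : cfg k d) (a b : cfg (n - k) d) :
  inner k M (glue t a) (glue t b) = \sum_(s : cfg k d) entry M (glue s b) (glue s a).
Proof.
rewrite /inner big_mkcond (sum_glue hk) /=; apply: eq_bigr => s _.
under eq_bigr do rewrite agree_hi_glue sp_glue.
by rewrite -big_mkcond big_pred1_eq.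
Qed.

Lemma Fk_ptrace X M :
  Fk X k M = ((d ^ k)%:R)^-1 * \tr (ptrace k X *m ptrace k M).
Proof.
rewrite /Fk tr_entry; congr (_ * _).
rewrite (sum_glue hk); under eq_bigr => t _ do under eq_bigr => a _ do rewrite (sum_glue hk).
have step : forall (t : cfg k d) (a : cfg (n - k) d),
  \sum_(t' : cfg k d) \sum_(b : cfg (n - k) d)
     (agree_lo k (glue t a) (glue t' b))%:R * entry X (glue t a) (glue t' b) *
     inner k M (glue t a) (glue t' b) =
  \sum_b entry X (glue t a) (glue t b) * \sum_(s : cfg k d) entry M (glue s b) (glue s a).
  move=> t a; rewrite (bigD1 t) //= [X in _ + X]big1 ?addr0.
    by apply: eq_bigr => b _; rewrite agree_lo_glue eqxx mul1r inner_glue.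
  move=> t' ht'; apply: big1 => b _.
  by rewrite agree_lo_glue eq_sym (negbTE ht') !mul0r.
under eq_bigr => t _ do under eq_bigr => a _ do rewrite step.
rewrite exchange_big; apply: eq_bigr => a _; rewrite exchange_big; apply: eq_bigr => b _.
by rewrite !entry_mkOp mulr_suml.
Qed.

End GlueK.

Lemma sum_delta (T : finType) (x : T) (G : T -> C) :
  \sum_y (x == y)%:R * G y = G x.
Proof.
rewrite (bigD1 x) //= eqxx mul1r big1 ?addr0 // => y hy.
by rewrite eq_sym (negbTE hy) mul0r.
Qed.

Lemma F0 X M : Fk X 0 M = \tr (X *m M).
Proof.
rewrite /Fk expn0 invr1 mul1r tr_entry; apply: eq_bigr => x _; apply: eq_bigr => y _.
have -> : agree_lo 0 x y by apply/forallP => j.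
rewrite mul1r; congr (_ * _).
have e : forall w, agree_hi 0 w y = (w == y).
  move=> w; apply/forallP/eqP => [h|->]; last by move=> j; apply/implyP.
  by apply/ffunP => j; have := h j; rewrite leq0n /= => /eqP.
rewrite /inner (eq_bigl _ _ e) big_pred1_eq; congr (entry M y _).
by apply/ffunP => j; rewrite ffunE.
Qed.

Lemma Fn X M : \tr X = 0 -> Fk X n M = 0.
Proof.
move=> trX; rewrite /Fk.
have e1 : forall x y, agree_lo n x y = (x == y).
  move=> x y; apply/forallP/eqP => [h|->]; last by move=> j; apply/implyP.
  by apply/ffunP => j; have := h j; rewrite ltn_ord /= => /eqP.
have e2 : forall x, inner n M x x = \sum_w entry M w w.
  move=> x; rewrite /inner; apply: eq_big => [w|w _].
    by apply/forallP => j; apply/implyP; rewrite leqNgt ltn_ord.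
  by congr (entry M w _); apply/ffunP => j; rewrite ffunE ltn_ord.
under eq_bigr => x _ do under eq_bigr => y _ do rewrite e1 -mulrA.
under eq_bigr => x _ do rewrite sum_delta e2.
by rewrite -mulr_suml -(tr_entry1 X) trX mul0r mulr0.
Qed.

Lemma inner_sub k (A B : Op R n d) x y :
  inner k (A - B) x y = inner k A x y - inner k B x y.
Proof. by rewrite /inner -sumrB; apply: eq_bigr => w _; rewrite /entry !mxE. Qed.

Lemma Fk_sub X k (A B : Op R n d) : Fk X k (A - B) = Fk X k A - Fk X k B.
Proof.
rewrite /Fk -mulrBr -sumrB; congr (_ * _); apply: eq_bigr => x _.
rewrite -sumrB; apply: eq_bigr => y _; rewrite inner_sub; ring.
Qed.

End S5.

Section S6.
Variable R : realType.
Local Notation C := (R[i]).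
Variables n d : nat.
Local Notation cfgn := (cfg n d).

Definition set1 (w : cfgn) (i : 'I_n) (c : 'I_d) : cfgn :=
  [ffun j => if j == i then c else w j].

Lemma set1_set1 w i c c' : set1 (set1 w i c) i c' = set1 w i c'.
Proof. by apply/ffunP => j; rewrite !ffunE; case: (j == i). Qed.

Lemma set1_id w i : set1 w i (w i) = w.
Proof. by apply/ffunP => j; rewrite !ffunE; case: eqP => // ->. Qed.

Lemma set1_eq w i c : (set1 w i c == w) = (w i == c).
Proof.
apply/eqP/eqP => [<-|<-]; first by rewrite ffunE eqxx.
exact: set1_id.
Qed.

Lemma agree_lo_S (i : 'I_n) (x y : cfgn) :
  agree_lo i.+1 x y = agree_lo i x y && (x i == y i).
Proof.
apply/forallP/andP => [h|[/forallP h1 h2] j].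
  split; last by have := h i; rewrite ltnSn.
  by apply/forallP => j; apply/implyP => hj; have /implyP := h j; apply; apply: ltnW.
apply/implyP; rewrite ltnS leq_eqVlt => /orP[e|hj].
  by have -> : j = i by apply: val_inj; apply/eqP.
by have /implyP := h1 j; apply.
Qed.

Lemma agree_hi_S (i : 'I_n) (x y : cfgn) :
  agree_hi i x y = agree_hi i.+1 x y && (x i == y i).
Proof.
apply/forallP/andP => [h|[/forallP h1 h2] j].
  split; last by have := h i; rewrite leqnn.
  by apply/forallP => j; apply/implyP => hj; have /implyP := h j; apply; apply: ltnW.
apply/implyP; rewrite leq_eqVlt => /orP[e|hj].
  by have -> : j = i by apply: val_inj; apply/eqP; rewrite eq_sym.
by have /implyP := h1 j; apply.
Qed.

Lemma agree_hi_set1 (i : 'I_n) (w : cfgn) c (y : cfgn) :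
  agree_hi i.+1 (set1 w i c) y = agree_hi i.+1 w y.
Proof.
apply: eq_forallb => j; case hj: (i < j)%N => //=.
rewrite ffunE (_ : (j == i) = false) //; apply/eqP => e; by rewrite e ltnn in hj.
Qed.

Lemma inner_step (i : 'I_n) (Hi : Op R n d) (K : cfgn -> cfgn -> C)
  (hK : forall x x' y y' : cfgn,
        (forall j, j != i -> x j = x' j /\ y j = y' j) -> K x y = K x' y')
  (hH : forall x y : cfgn, entry Hi x y = (x i == y i)%:R * K x y)
  (hd : (0 < d)%N) (x y : cfgn) :
  ((d ^ i)%:R)^-1 * ((agree_lo i x y)%:R * inner i Hi x y) =
  ((d ^ i.+1)%:R)^-1 * ((agree_lo i.+1 x y)%:R * inner i.+1 Hi x y).
Proof.
rewrite agree_lo_S; case: (agree_lo i x y); last by rewrite !mul0r !mulr0.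
rewrite /=; have [exy|nxy] := eqVneq (x i) (y i); last first.
  rewrite mul0r mulr0 mul1r /inner big1 ?mulr0 // => w hw.
  rewrite hH ffunE ltnn.
  have := forallP hw i; rewrite leqnn /= => /eqP ->.
  by rewrite eq_sym (negbTE nxy) mul0r.
rewrite !mul1r.
set G := fun w' => K w' (sp i w' x).
have e1 : inner i Hi x y = \sum_(w | agree_hi i w y) G w.
  apply: eq_bigr => w hw; rewrite hH ffunE ltnn.
  have := forallP hw i; rewrite leqnn /= => /eqP ->.
  by rewrite exy eqxx mul1r.
have e2 : inner i.+1 Hi x y = \sum_(w | agree_hi i.+1 w y) G (set1 w i (y i)).
  apply: eq_bigr => w hw; rewrite hH ffunE ltnSn eqxx mul1r /G.
  apply: hK => j hj; split; first by rewrite ffunE (negbTE hj).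
  rewrite !ffunE (negbTE hj) ltnS leq_eqVlt.
  by rewrite (_ : (val j == val i) = false) //; apply/negbTE.
have e3 : forall c : 'I_d,
    \sum_(w | agree_hi i.+1 w y && (w i == c)) G (set1 w i (y i)) =
    \sum_(w | agree_hi i w y) G w.
  move=> c.
  rewrite (reindex_onto (fun w' => set1 w' i c) (fun w => set1 w i (y i))); last first.
    by move=> w /andP[_ /eqP <-]; rewrite set1_set1 set1_id.
  apply: eq_big => [w|w /andP[_ /eqP hw]]; last first.
    by rewrite hw.
  by rewrite agree_hi_set1 ffunE !eqxx andbT set1_set1 set1_eq agree_hi_S.
rewrite e1 e2 [X in _ = _ * X](partition_big (fun w : cfgn => w i) xpredT) //.
under eq_bigr do rewrite e3.
have ec : forall S : C, \sum_(c : 'I_d | xpredT c) S = S *+ d.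
  by move=> S; rewrite sumr_const card_ord.
rewrite ec -mulr_natr !natrX exprS.
have d0 : (d%:R : C) != 0 by rewrite pnatr_eq0 -lt0n.
field.
by rewrite d0 expf_neq0.
Qed.


Lemma Fk_orth X (i : 'I_n) (Hi : Op R n d) : acts_trivially i Hi -> (0 < d)%N ->
  Fk X i Hi = Fk X i.+1 Hi.
Proof.
case=> K [hK hH] hd; rewrite /Fk !mulr_sumr; apply: eq_bigr => x _.
rewrite !mulr_sumr; apply: eq_bigr => y _.
have h := inner_step hK hH hd x y.
transitivity (entry X x y * (((d ^ i)%:R)^-1 * ((agree_lo i x y)%:R * inner i Hi x y))).
  by ring.
by rewrite h; ring.
Qed.

End S6.

Section S7.
Variable R : realType.
Local Notation C := (R[i]).

Lemma sum_rank_R (T : finType) (F : 'I_#|T| -> R) :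
  \sum_i F i = \sum_(x : T) F (enum_rank x).
Proof. by rewrite (reindex (@enum_rank T)) //; apply: onW_bij; apply: enum_rank_bij. Qed.

Lemma sum_delta_R (T : finType) (x : T) (G : T -> R) :
  \sum_y (y == x)%:R * G y = G x.
Proof.
rewrite (bigD1 x) //= eqxx mul1r big1 ?addr0 // => y hy.
by rewrite (negbTE hy) mul0r.
Qed.

Lemma sum_delta_C (T : finType) (x : T) (G : T -> C) :
  \sum_y (y == x)%:R * G y = G x.
Proof.
rewrite (bigD1 x) //= eqxx mul1r big1 ?addr0 // => y hy.
by rewrite (negbTE hy) mul0r.
Qed.

Lemma cabs2_bool (b : bool) (z : C) : cabs2 (b%:R * z) = b%:R * cabs2 z.
Proof. by case: b; rewrite ?mul1r ?mul0r // /cabs2 /= expr0n /= addr0. Qed.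

Lemma conj_bool (b : bool) (z : C) : conjC (b%:R * z) = b%:R * conjC z.
Proof. by case: b; rewrite ?mul1r ?mul0r ?rmorph0. Qed.

Lemma natC_inv (m : nat) : ((m%:R : C)^-1) = (((m%:R : R)^-1)%:C)%C.
Proof. by rewrite fmorphV /= rmorph_nat. Qed.

Lemma dotcNr m (u w : 'cV[C]_m) : dotc u (- w) = - dotc u w.
Proof. rewrite /dotc -sumrN; apply: eq_bigr => k _; rewrite mxE; ring. Qed.

Lemma holder_abs m (Z N : 'M[C]_m) (c : R) :
  (forall u w : 'cV[C]_m, `|complex.Re (dotc u (N *m w))| <= c * (vnorm u * vnorm w)) ->
  `|complex.Re (\tr (Z *m N))| <= c * trnorm Z.
Proof.
move=> hb; rewrite ler_norml; apply/andP; split; last first.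
  apply: holder => u w; apply: le_trans (hb u w); exact: ler_norm.
rewrite lerNl -ReN.
have -> : - \tr (Z *m N) = \tr (Z *m - N) by rewrite mulmxN raddfN.
apply: holder => u w.
rewrite mulNmx dotcNr ReN; apply: le_trans (hb u w); rewrite -normrN; exact: ler_norm.
Qed.

Section Lift.
Variables n d k : nat.
Hypothesis hk : (k <= n)%N.

Definition liftv (s : cfg k d) (u : 'cV[C]_#|{: cfg (n - k) d}|) : 'cV[C]_#|{: cfg n d}| :=
  \col_i ((lo hk (enum_val i) == s)%:R * u (enum_rank (hi k (enum_val i))) 0).

Lemma liftvE s u (x : cfg n d) :
  liftv s u (enum_rank x) 0 = (lo hk x == s)%:R * u (enum_rank (hi k x)) 0.
Proof. by rewrite mxE enum_rankK. Qed.

Lemma vnorm_lift s u : vnorm (liftv s u) = vnorm u.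
Proof.
rewrite /vnorm; congr Num.sqrt.
rewrite sum_rank_R (sum_rank_R (fun j => cabs2 (u j 0))).
under eq_bigr do rewrite liftvE.
rewrite (sum_glue_R hk); under eq_bigr do under eq_bigr do rewrite lo_glue hi_glue cabs2_bool.
rewrite (eq_bigr (fun t : cfg k d => (t == s)%:R * \sum_(a : cfg (n - k) d) cabs2 (u (enum_rank a) 0))).
  by rewrite sum_delta_R.
by move=> t _; rewrite mulr_sumr.
Qed.

Lemma dotc_lift s u w (M : Op R n d) :
  dotc (liftv s u) (M *m liftv s w) =
  \sum_(a : cfg (n - k) d) \sum_(b : cfg (n - k) d)
     conjC (u (enum_rank a) 0) * (entry M (glue s a) (glue s b) * w (enum_rank b) 0).
Proof.
rewrite /dotc sum_rank; under eq_bigr do rewrite liftvE mxE sum_rank.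
under eq_bigr do under eq_bigr do rewrite liftvE.
rewrite (sum_glue hk); apply: etrans (_ : \sum_(t : cfg k d) (t == s)%:R *
   \sum_(a : cfg (n - k) d) conjC (u (enum_rank a) 0) *
     \sum_(b : cfg (n - k) d) entry M (glue s a) (glue s b) * w (enum_rank b) 0 = _).
  apply: eq_bigr => t _; rewrite mulr_sumr; apply: eq_bigr => a _.
  rewrite lo_glue hi_glue conj_bool -mulrA.
  have [->|ts] := eqVneq t s; last by rewrite /= mulr0n !mul0r.
  rewrite /= mulr1n !mul1r; congr (_ * _).
  rewrite (sum_glue hk) (bigD1 s) //= [X in _ + X]big1 ?addr0.
    by apply: eq_bigr => b _; rewrite lo_glue hi_glue eqxx mul1r.
  move=> t' ht'; apply: big1 => b _.
  by rewrite lo_glue (negbTE ht') mul0r mulr0.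
by rewrite sum_delta_C; apply: eq_bigr => a _; rewrite mulr_sumr.
Qed.

Hypothesis hd : (0 < d)%N.

Lemma bilin_ptrace (M : Op R n d) (u w : 'cV[C]_#|{: cfg (n - k) d}|) :
  `|complex.Re (dotc u ((((d ^ k)%:R)^-1 *: ptrace k M) *m w))| <=
     opnorm M * (vnorm u * vnorm w).
Proof.
have e : dotc u ((((d ^ k)%:R)^-1 *: ptrace k M) *m w) =
   ((d ^ k)%:R)^-1 * \sum_(s : cfg k d) dotc (liftv s u) (M *m liftv s w).
  under [X in _ = _ * X]eq_bigr do rewrite dotc_lift.
  rewrite -scalemxAl /dotc sum_rank exchange_big mulr_sumr; apply: eq_bigr => a _.
  rewrite mxE [(_ *m w) _ _]mxE sum_rank [in RHS]exchange_big mulrCA; congr (_ * _).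
  rewrite mulr_sumr; apply: eq_bigr => b _.
  rewrite -[ptrace k M _ _]/(entry (ptrace k M) a b) entry_mkOp mulr_suml mulr_sumr.
  by apply: eq_bigr => s _; ring.
rewrite e natC_inv Re_real_mul Re_sum normrM ger0_norm ?invr_ge0 ?ler0n //.
apply: (@le_trans _ _ (((d ^ k)%:R)^-1 * \sum_(s : cfg k d) (opnorm M * (vnorm u * vnorm w)))).
  rewrite ler_wpM2l ?invr_ge0 ?ler0n //; apply: le_trans (ler_norm_sum _ _ _) _.
  apply: ler_sum => s _; apply: le_trans (bilin_bound _ _ _) _.
  by rewrite !vnorm_lift.
have hc : forall B : R, \sum_(s : cfg k d) B = B *+ (d ^ k).
  by move=> B; rewrite sumr_const card_ffun !card_ord.
rewrite hc -[(opnorm M * _) *+ _]mulr_natl. rewrite mulKf //.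
by rewrite pnatr_eq0 -lt0n expn_gt0 hd.
Qed.

End Lift.
End S7.

Local Open Scope classical_set_scope.
Section S8.
Variable R : realType.
Local Notation C := (R[i]).

Lemma trnorm_ge0 m (A : 'M[C]_m) : 0 <= trnorm A.
Proof. by apply: sumr_ge0 => i _; apply: sqrtr_ge0. Qed.

Lemma telesc (g : nat -> R) n : \sum_(i < n) (g i - g i.+1) = g 0%N - g n.
Proof.
elim: n => [|n IH]; first by rewrite big_ord0 subrr.
by rewrite big_ord_recr /= IH; ring.
Qed.

Lemma le_inf_mul (E : set R) (t b : R) : 0 <= b -> E !=set0 ->
  (forall e, E e -> t <= b * e) -> t <= b * inf E.
Proof.
move=> b0 [e0 Ee0] h; have [eb|bn0] := eqVneq b 0.
  by have := h e0 Ee0; rewrite eb !mul0r.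
have bp : 0 < b by rewrite lt0r bn0.
rewrite -ler_pdivrMl //; apply: lb_le_inf; first by exists e0.
by move=> e Ee; rewrite ler_pdivrMl // h.
Qed.

Variables n d : nat.
Variable X : Op R n d.

Definition Tk (k : nat) : R := if k is 0 then trnorm X else trnorm (ptrace k X).
Definition Tk' (k : nat) : R := if (k < n)%N then Tk k else 0.

Lemma Tk_ge0 k : 0 <= Tk k.
Proof. by case: k => [|k]; apply: trnorm_ge0. Qed.

Lemma Tk'_ge0 k : 0 <= Tk' k.
Proof. by rewrite /Tk'; case: ifP => _ //; apply: Tk_ge0. Qed.

Hypothesis trX : \tr X = 0.
Hypothesis hd : (0 < d)%N.

Lemma Fk_bound k (M : Op R n d) : (k <= n)%N ->
  `|complex.Re (Fk X k M)| <= Tk' k * opnorm M.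
Proof.
move=> hk; rewrite /Tk'; case: ltnP => hkn; last first.
  have -> : k = n by apply/eqP; rewrite eqn_leq hk hkn.
  by rewrite Fn // normr0 mul0r.
case: k hk hkn => [|k] hk hkn.
  rewrite F0 mulrC /=; apply: holder_abs => u w; exact: bilin_bound.
rewrite (Fk_ptrace hk) -mxtraceZ scalemxAr mulrC /=.
apply: holder_abs => u w; exact: bilin_ptrace.
Qed.

Lemma selfadj0 : selfadj (0 : Op R n d).
Proof. by apply/matrixP => i j; rewrite !mxE rmorph0. Qed.

Lemma acts0 (i : 'I_n) : acts_trivially i (0 : Op R n d).
Proof.
exists (fun _ _ => 0); split => // x y; by rewrite /entry mxE mulr0.
Qed.

Lemma step_bound (H : Op R n d) (i : 'I_n) :
  complex.Re (Fk X i H) - complex.Re (Fk X i.+1 H) <=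
  (Tk' i + Tk' i.+1) *
  inf [set opnorm (H - Hi) |
       Hi in [set Hi : Op R n d | selfadj Hi /\ acts_trivially i Hi]].
Proof.
apply: le_inf_mul.
- by rewrite addr_ge0 // Tk'_ge0.
- by exists (opnorm (H - 0)); exists 0 => //; split; [exact: selfadj0|exact: acts0].
move=> _ [Hi [_ hHi] <-].
rewrite -ReB.
have -> : Fk X i H - Fk X i.+1 H = Fk X i (H - Hi) - Fk X i.+1 (H - Hi).
  by rewrite !Fk_sub (Fk_orth X hHi hd); ring.
rewrite ReB mulrDl.
have h1 := Fk_bound (H - Hi) (ltnW (ltn_ord i)).
have h2 := Fk_bound (H - Hi) (ltn_ord i).
apply: lerD.
  by apply: le_trans h1; apply: ler_norm.
by rewrite -normrN in h2; apply: le_trans h2; apply: ler_norm.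
Qed.

End S8.

Local Close Scope classical_set_scope.

Unset Implicit Arguments. Set Strict Implicit. Set Printing Implicit Defensive.
Local Open Scope ring_scope.
Lemma final_sum (R : realType) (n d : nat) (X : Op R n d) : n != 0%N ->
  \sum_(i < n) (Tk X i + Tk' X i.+1) * 2^-1 <=
  trnorm X + \sum_(k < n.-1) trnorm (ptrace k.+1 X).
Proof.
case: n X => [//|m] X _.
rewrite -mulr_suml big_split /= [Y in _ <= Y](_ : _ = \sum_(i < m.+1) Tk X i); last first.
  by rewrite big_ord_recl.
set A := \sum_(i < m.+1) Tk X i.
have hB : \sum_(i < m.+1) Tk' X i.+1 <= A.
  rewrite big_ord_recr /= /Tk' ltnn addr0 /A big_ord_recl /=.
  rewrite -[Y in Y <= _]add0r; apply: lerD; first exact: trnorm_ge0.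
  by apply: ler_sum => i _; rewrite ltnS ltn_ord /bump leq0n add1n.
have A0 : 0 <= A by rewrite sumr_ge0 // => i _; apply: Tk_ge0.
lra.
Qed.

Theorem mainTheorem8 (R : realType) (n d : nat) (X : Op R n d) :
  selfadj X -> \tr X = 0 ->
  W1norm X <= trnorm X + \sum_(k < n.-1) trnorm (ptrace k.+1 X).
Proof.
move=> _ trX.
have RHS0 : 0 <= trnorm X + \sum_(k < n.-1) trnorm (ptrace k.+1 X).
  by rewrite addr_ge0 ?trnorm_ge0 // sumr_ge0 // => k _; apply: trnorm_ge0.
rewrite /W1norm.
set S := (X in sup X).
have [[y Sy]|nE] := pselect (S !=set0)%classic; last by rewrite sup_out // => -[].
apply: ge_sup; first by exists y.
move=> _ [H [_ hL] <-].
have hF0 := F0 X H.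
have [hn|hn] := eqVneq n 0%N.
  have e : Fk X 0 H = Fk X n H by congr (Fk X _ H).
  by rewrite -hF0 e (Fn H trX) Re0.
have [hd|hd] := eqVneq d 0%N.
  have i0 : 'I_n by exists 0%N; rewrite lt0n.
  rewrite tr_entry big1 ?Re0 // => x _.
  by case: (x i0) => m hm; have := leq_trans hm (eq_leq hd).
have hd' : (0 < d)%N by rewrite lt0n.
pose g k := complex.Re (Fk X k H).
have ht := telesc g n.
have gn : g n = 0 by rewrite /g (Fn H trX) Re0.
have eg : complex.Re (\tr (X *m H)) = \sum_(i < n) (g i - g i.+1).
  by rewrite ht gn subr0 /g hF0.
rewrite eg.
have hinf : forall i : 'I_n,
   inf [set opnorm (H - Hi) |
       Hi in [set Hi : Op R n d | selfadj Hi /\ acts_trivially i Hi]] <= 2^-1.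
  move=> i; move: hL; rewrite /lipschitz => hL.
  have hm := le_bigmax 0 (fun i : 'I_n => inf [set opnorm (H - Hi) |
       Hi in [set Hi : Op R n d | selfadj Hi /\ acts_trivially i Hi]]) i.
  apply: le_trans hm _.
  rewrite -(ler_pM2l (_ : (0 : R) < 2)) // mulfV //. by rewrite pnatr_eq0.
apply: (@le_trans _ _ (\sum_(i < n) (Tk X i + Tk' X i.+1) * 2^-1)).
  apply: ler_sum => i _; apply: le_trans (step_bound trX hd' H i) _.
  rewrite /Tk' ltn_ord; apply: ler_wpM2l; last exact: hinf.
  by rewrite addr_ge0 ?Tk_ge0 ?Tk'_ge0.
exact: final_sum.
Qed.
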